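(* Consider the ride-hailing model in the context and a demand vector $\bm b^C$ with $0\le b^C_i\le b_i$. The program $\mathcal{CV}(\bm b^C)$ may have multiple optimal solutions (multiple CV equilibria), but all optimal solutions $\bm x^C$: 1. yield the same platform profit $\pi(\bm b^C)=\sum_{i,\alpha}r^{C2P}_{i\alpha}x^C_{i\alpha}$; 2. have the same active mass $m^C_0=\sum_{i,\alpha}\tau^{dr}_{i\alpha}x^C_{i\alpha}$; 3. moreover $\pi(\bm b^C)$, as a function of the CV fleet mass $N$ (with $\bm b^C$ and all other parameters fixed), is non-decreasing in $N$; 4. every optimal solution $\bm x^C$ of $\mathcal{CV}(\bm b^C)$ is also an optimal solution of the problem: maximize $\sum_{i,\alpha}r^C_{i\alpha}x_{i\alpha}$ over $\bm x\ge0$ satisfying $\sum_j x_{ji}\le b^C_i$ for all $i$, flow balance, and $\sum_{i,\alpha}\tau^{dr}_{i\alpha}x_{i\alpha}\le m^C_0$.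
   Context: Model. There are $L$ regions $\{1,\dots,L\}$. For regions $i,j$, $b_{ij}\ge0$ is the customer rate from $i$ to $j$; $b_i=\sum_j b_{ij}$ (assumed $>0$), $q_{ij}=b_{ij}/b_i$. Travel times satisfy $t_{ij}>0$ for $i\ne j$, $t_{ii}=0$. Constants: $p>0$, $c\ge0$, $R\in(0,1)$, CV fleet mass $N>0$. For $i,\alpha$: $\tau^{dr}_{i\alpha}=t_{i\alpha}+\sum_j q_{\alpha j}t_{\alpha j}$, $r^C_{i\alpha}=p(1-R)\sum_j q_{\alpha j}t_{\alpha j}-c\tau^{dr}_{i\alpha}$, $r^{C2P}_{i\alpha}=pR\sum_j q_{\alpha j}t_{\alpha j}$. A matrix $\bm x\in\mathbb R^{L\times L}_{\ge0}$ satisfies flow balance if $\sum_j(\sum_k x_{kj})q_{ji}=\sum_\alpha x_{i\alpha}$ for all $i$. $\mathcal{CV}(\bm b^C)$: maximize $N\log\sum_{i,\alpha}r^C_{i\alpha}x_{i\alpha}-\sum_{i,\alpha}\tau^{dr}_{i\alpha}x_{i\alpha}$ over $\bm x\ge0$ satisfying flow balance and $\sum_j x_{ji}\le b^C_i$ for all $i$. *)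

(* Defs.v *)
From HB Require Import structures.
From mathcomp Require Import all_boot all_order all_algebra.
From mathcomp Require Import reals exp.
Set Implicit Arguments. Unset Strict Implicit. Unset Printing Implicit Defensive.
Import Order.TTheory GRing.Theory Num.Theory.
Local Open Scope ring_scope.

Section RideHailing.
Variables (R : realType) (L : nat).
(* b i j : customer rate from region i to region j; t i j : travel time *)
Variables (b t : 'I_L -> 'I_L -> R).

Definition bsum (i : 'I_L) : R := \sum_(j < L) b i j.
Definition qm (i j : 'I_L) : R := b i j / bsum i.
Definition wbar (a : 'I_L) : R := \sum_(j < L) qm a j * t a j.
Definition tau_dr (i a : 'I_L) : R := t i a + wbar a.
Definition rC (p c Rr : R) (i a : 'I_L) : R := p * (1 - Rr) * wbar a - c * tau_dr i a.
Definition rC2P (p Rr : R) (i a : 'I_L) : R := p * Rr * wbar a.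

Definition flow_balance (x : 'M[R]_L) : Prop :=
  forall i : 'I_L, \sum_(j < L) (\sum_(k < L) x k j) * qm j i = \sum_(a < L) x i a.

Definition CV_feasible (bC : 'I_L -> R) (x : 'M[R]_L) : Prop :=
  [/\ forall i a, 0 <= x i a, flow_balance x & forall i, \sum_(j < L) x j i <= bC i].

Definition lin (w : 'I_L -> 'I_L -> R) (x : 'M[R]_L) : R :=
  \sum_(i < L) \sum_(a < L) w i a * x i a.

Definition CV_revenue p c Rr (x : 'M[R]_L) : R := lin (rC p c Rr) x.
Definition platform_profit p Rr (x : 'M[R]_L) : R := lin (rC2P p Rr) x.
Definition active_mass (x : 'M[R]_L) : R := lin tau_dr x.

Definition CV_obj (N p c Rr : R) (x : 'M[R]_L) : R :=
  N * ln (CV_revenue p c Rr x) - active_mass x.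

(* Optimal solution of CV(bC): the log requires positive revenue, so the
   effective domain is the feasible points with positive revenue. *)
Definition CV_optimal (N p c Rr : R) (bC : 'I_L -> R) (x : 'M[R]_L) : Prop :=
  [/\ CV_feasible bC x, 0 < CV_revenue p c Rr x &
      forall y, CV_feasible bC y -> 0 < CV_revenue p c Rr y ->
        CV_obj N p c Rr y <= CV_obj N p c Rr x].

Definition LP_optimal (p c Rr : R) (bC : 'I_L -> R) (m0 : R) (x : 'M[R]_L) : Prop :=
  [/\ CV_feasible bC x, active_mass x <= m0 &
      forall y, CV_feasible bC y -> active_mass y <= m0 ->
        CV_revenue p c Rr y <= CV_revenue p c Rr x].

End RideHailing.

(* Main.v *)
Require Import Defs.
From HB Require Import structures.
From mathcomp Require Import all_boot all_order all_algebra.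
From mathcomp Require Import reals exp.
From mathcomp Require Import lra ring.
Import Order.TTheory GRing.Theory Num.Theory.
Local Open Scope ring_scope.

Section S.
Variables (R : realType) (L : nat) (b t : 'I_L -> 'I_L -> R).

Lemma sum_comb (f g : 'I_L -> R) (a c : R) :
  \sum_(k < L) (a * f k + c * g k) = a * \sum_(k < L) f k + c * \sum_(k < L) g k.
Proof. by rewrite big_split /= !mulr_sumr. Qed.

Lemma lin_comb w (x y : 'M[R]_L) a c :
  lin w (a *: x + c *: y) = a * lin w x + c * lin w y.
Proof.
rewrite /lin -sum_comb; apply: eq_bigr => i _.
rewrite -sum_comb; apply: eq_bigr => j _; rewrite !mxE; ring.
Qed.

Lemma feas_mid bC (x y : 'M[R]_L) : CV_feasible b bC x -> CV_feasible b bC y ->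
  CV_feasible b bC (2^-1 *: x + 2^-1 *: y).
Proof.
move=> [x0 fx bx] [y0 fy by_]; split.
- move=> i a; rewrite !mxE; have := x0 i a; have := y0 i a; lra.
- move=> i.
  have cs : forall j, \sum_(k < L) (2^-1 *: x + 2^-1 *: y) k j =
     2^-1 * \sum_(k < L) x k j + 2^-1 * \sum_(k < L) y k j.
    by move=> j; rewrite -sum_comb; apply: eq_bigr => k _; rewrite !mxE.
  under eq_bigr do rewrite cs mulrDl -!mulrA.
  rewrite sum_comb fx fy -sum_comb; apply: eq_bigr => a _; rewrite !mxE.
  done.
- move=> i.
  have -> : \sum_(j < L) (2^-1 *: x + 2^-1 *: y) j i =
     2^-1 * \sum_(j < L) x j i + 2^-1 * \sum_(j < L) y j i.
    by rewrite -sum_comb; apply: eq_bigr => k _; rewrite !mxE.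
  have := bx i; have := by_ i; lra.
Qed.

Lemma profit_id p c Rr (x : 'M[R]_L) :
  (1 - Rr) * platform_profit b t p Rr x =
  Rr * (CV_revenue b t p c Rr x + c * active_mass b t x).
Proof.
rewrite /platform_profit /CV_revenue /active_mass /lin.
rewrite mulrDr !mulr_sumr -big_split /=; apply: eq_bigr => i _.
rewrite !mulr_sumr -big_split /=; apply: eq_bigr => a _.
rewrite /rC /rC2P /tau_dr; ring.
Qed.

Lemma ln_strict (u v : R) : 0 < u -> 0 < v -> u != v ->
  ln u + ln v < 2 * ln (2^-1 * u + 2^-1 * v).
Proof.
move=> hu hv huv.
have hm : 0 < 2^-1 * u + 2^-1 * v by lra.
rewrite -lnM ?posrE // mulr_natl -lnXn //.
rewrite ltr_ln ?posrE ?mulr_gt0 ?exprn_gt0 //.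
case: (ltgtP u v) huv => // h _; nra.
Qed.

Lemma uniq_opt (N : R) p c Rr bC (x y : 'M[R]_L) : 0 < N ->
  CV_optimal b t N p c Rr bC x -> CV_optimal b t N p c Rr bC y ->
  CV_revenue b t p c Rr x = CV_revenue b t p c Rr y /\
  active_mass b t x = active_mass b t y.
Proof.
move=> hN [fx rx ox] [fy ry oy].
have hxy := ox y fy ry; have hyx := oy x fx rx.
move: hxy hyx; rewrite /CV_obj => hxy hyx.
case: (eqVneq (CV_revenue b t p c Rr x) (CV_revenue b t p c Rr y)) => hr.
  by split=> //; move: hxy hyx; rewrite hr; lra.
exfalso.
set z := 2^-1 *: x + 2^-1 *: y.
have fz : CV_feasible b bC z by apply: feas_mid.
have rzE : CV_revenue b t p c Rr z =
  2^-1 * CV_revenue b t p c Rr x + 2^-1 * CV_revenue b t p c Rr y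
  by rewrite /CV_revenue lin_comb.
have mzE : active_mass b t z = 2^-1 * active_mass b t x + 2^-1 * active_mass b t y
  by rewrite /active_mass lin_comb.
have rz : 0 < CV_revenue b t p c Rr z by rewrite rzE; lra.
have := ox z fz rz; rewrite /CV_obj rzE mzE.
have := ln_strict _ _ rx ry hr.
set A := ln (CV_revenue b t p c Rr x); set B := ln (CV_revenue b t p c Rr y).
set C := ln _.
move=> hs hz.
have : N * (A + B) < N * (2 * C) by rewrite ltr_pM2l.
rewrite mulrDr mulrA => hh; move: hz hxy hyx hh; set NA := N * A; set NB := N * B; set NC := N * C; have -> : N * 2 * C = 2 * NC by rewrite /NC; ring.
lra.
Qed.

Lemma profit_eq p c Rr (x y : 'M[R]_L) : Rr < 1 ->
  CV_revenue b t p c Rr x = CV_revenue b t p c Rr y ->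
  active_mass b t x = active_mass b t y ->
  platform_profit b t p Rr x = platform_profit b t p Rr y.
Proof.
move=> hR hr hm.
have h := profit_id p c Rr x; rewrite hr hm -profit_id in h.
apply: (mulfI _ h); rewrite subr_eq0; apply/eqP => e; move: hR; rewrite -e ltxx.
done.
Qed.

End S.
Arguments uniq_opt {R L b t N p c Rr bC x y}.
Arguments profit_eq {R L b t p c Rr x y}.
Arguments profit_id {R L b t}.

Theorem proposition2 (R : realType) (L : nat) (b t : 'I_L -> 'I_L -> R)
  (p c Rr N : R) (bC : 'I_L -> R) :
  (forall i j, 0 <= b i j) ->
  (forall i, 0 < bsum b i) ->
  (forall i j, i != j -> 0 < t i j) ->
  (forall i, t i i = 0) ->
  0 < p -> 0 <= c -> 0 < Rr < 1 -> 0 < N ->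
  (forall i, 0 <= bC i <= bsum b i) ->
  (* 1. same platform profit *)
  (forall x y, CV_optimal b t N p c Rr bC x -> CV_optimal b t N p c Rr bC y ->
     platform_profit b t p Rr x = platform_profit b t p Rr y) /\
  (* 2. same active mass *)
  (forall x y, CV_optimal b t N p c Rr bC x -> CV_optimal b t N p c Rr bC y ->
     active_mass b t x = active_mass b t y) /\
  (* 3. platform profit non-decreasing in the fleet mass N *)
  (forall N1 N2 x1 x2, 0 < N1 -> N1 <= N2 ->
     CV_optimal b t N1 p c Rr bC x1 -> CV_optimal b t N2 p c Rr bC x2 ->
     platform_profit b t p Rr x1 <= platform_profit b t p Rr x2) /\
  (* 4. every CV optimum solves the LP with active mass bound m0 *)
  (forall x, CV_optimal b t N p c Rr bC x ->
     LP_optimal b t p c Rr bC (active_mass b t x) x).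
Proof.
move=> _ _ _ _ hp hc /andP[hR0 hR1] hN _.
split; [|split; [|split]].
- move=> x y ox oy; have [hr hm] := uniq_opt hN ox oy.
  exact: (profit_eq hR1 hr hm).
- by move=> x y ox oy; have [hr hm] := uniq_opt hN ox oy.
- move=> N1 N2 x1 x2 hN1 hN12 o1 o2.
  case: (eqVneq N1 N2) => [e|ne].
    subst N2; have [hr hm] := uniq_opt hN1 o1 o2.
    by rewrite (profit_eq hR1 hr hm).
  have hlt : N1 < N2 by rewrite lt_neqAle ne.
  case: o1 => [f1 r1 O1]; case: o2 => [f2 r2 O2].
  have h1 := O1 x2 f2 r2; have h2 := O2 x1 f1 r1.
  move: h1 h2; rewrite /CV_obj.
  set A := ln (CV_revenue b t p c Rr x1); set B := ln (CV_revenue b t p c Rr x2).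
  set m1 := active_mass b t x1; set m2 := active_mass b t x2.
  move=> h1 h2.
  have hAB : A <= B.
    have : (N2 - N1) * (A - B) <= 0.
      have -> : (N2 - N1) * (A - B) = (N2 * A - N2 * B) - (N1 * A - N1 * B) by ring.
      lra.
    rewrite pmulr_rle0 ?subr_gt0 //; lra.
  have hrr : CV_revenue b t p c Rr x1 <= CV_revenue b t p c Rr x2.
    by move: hAB; rewrite /A /B ler_ln ?posrE.
  have hmm : m1 <= m2.
    have : 0 <= N1 * (B - A) by rewrite mulr_ge0 // ?subr_ge0 // ltW.
    rewrite mulrBr; lra.
  have e1 := profit_id p c Rr x1; have e2 := profit_id p c Rr x2.
  have hR : 0 < 1 - Rr by rewrite subr_gt0.
  rewrite -(ler_pM2l hR) e1 e2 ler_pM2l //.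
  by rewrite lerD // ler_wpM2l.
- move=> x [fx rx ox]; split=> // y fy my.
  case: (lerP (CV_revenue b t p c Rr y) 0) => ry.
    exact: (le_trans ry (ltW rx)).
  have := ox y fy ry; rewrite /CV_obj => h.
  rewrite -ler_ln ?posrE //.
  rewrite -(ler_pM2l hN); lra.
Qed.
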